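(* Let $\mathcal{U}$ be the set of all non-trivial parts that appear in some linear clobber game starting from a single part in $\mathcal{A}=\{(\mathtt{ox})^n : n\ge 1\}$. Let $\mathcal{O}=\{\mathtt{o}(\mathtt{xo})^t : t\ge 0\}$, $o\mathcal{A}=\{\mathtt{o}(\mathtt{ox})^t : t\ge 0\}$, $o\mathcal{O}=\{\mathtt{oo}(\mathtt{xo})^t : t\ge 0\}$, $o\mathcal{O}o=\{\mathtt{oo}(\mathtt{xo})^t\mathtt{o} : t\ge 0\}$ and $o\mathcal{A}x=\{\mathtt{o}(\mathtt{ox})^n\mathtt{x} : n\ge 1\}$. Then $\mathcal{U}$ equals the set of non-trivial parts belonging to $$\mathcal{A}\cup\mathcal{O}\cup o\mathcal{A}\cup o\mathcal{O}\cup o\mathcal{O}o\cup o\mathcal{A}x\cup(-\mathcal{O})\cup(-o\mathcal{A})\cup(-o\mathcal{O})\cup(-o\mathcal{O}o).$$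
   Context: Linear clobber is a two-player game (Left owns black stones $\mathtt{x}$, Right owns white stones $\mathtt{o}$) played on a path of cells, each cell empty or holding one stone. On a turn, a player chooses one of their stones that is in a cell adjacent (consecutive on the path) to a cell holding an opponent stone, removes the opponent stone and moves their own stone into that cell, leaving its original cell empty. Players alternate; a player who cannot move loses. A part is a maximal block of consecutive non-empty cells, written as a word over $\{\mathtt{o},\mathtt{x}\}$; a position is the disjoint sum of its parts. A part and its left-right reversal are identified (e.g. $\mathtt{xo}$ is identified with $\mathtt{ox}$). Words are written by concatenation, with exponents denoting repetition. A part is trivial if no two adjacent stones have different colors. For a part $p$, $-p$ is obtained by swapping the colors $\mathtt{o}\leftrightarrow\mathtt{x}$ of every stone, and for a set $X$ of parts, $-X=\{-p : p\in X\}$. A part ''appears in some game starting from'' a part $q$ if it is a part of some position reachable from the position $q$ by a sequence of legal moves (by either player, in any order). *)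

(* Defs.v *)
From mathcomp Require Import all_boot.
Set Implicit Arguments. Unset Strict Implicit. Unset Printing Implicit Defensive.

(* Stones: true = black stone x (Left), false = white stone o (Right). *)
Definition sx : bool := true.
Definition so : bool := false.

(* A word over {o,x}: a seq bool.  A board (path of cells): seq (option bool),
   None = empty cell, Some c = stone of colour c. *)
Definition board := seq (option bool).

Definition wpow (w : seq bool) (n : nat) : seq bool := flatten (nseq n w).

Definition wneg (w : seq bool) : seq bool := map negb w.

Definition board_of (w : seq bool) : board := map Some w.

Definition clobber_move (b b' : board) : Prop :=
  exists i j c,
    (j = i.+1 \/ i = j.+1) /\ i < size b /\ j < size b /\
    nth None b i = Some c /\ nth None b j = Some (~~ c) /\
    b' = set_nth None (set_nth None b j (Some c)) i None.

(* reachability by a sequence of legal moves, by either player, any order *)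
Inductive reachable (b : board) : board -> Prop :=
  | reach_refl : reachable b b
  | reach_step b1 b2 : reachable b b1 -> clobber_move b1 b2 -> reachable b b2.

(* w is a part (maximal block of consecutive non-empty cells) of board b *)
Definition is_part (b : board) (w : seq bool) : Prop :=
  w != [::] /\
  exists l r, b = l ++ board_of w ++ r /\
    (l = [::] \/ last None l = None) /\
    (r = [::] \/ head None r = None).

Definition nontrivial (w : seq bool) : Prop :=
  exists i, i.+1 < size w /\ nth so w i != nth so w i.+1.

Definition famA (w : seq bool) : Prop := exists n, 1 <= n /\ w = wpow [:: so; sx] n.
Definition famO (w : seq bool) : Prop := exists t, w = so :: wpow [:: sx; so] t.
Definition fam_oA (w : seq bool) : Prop := exists t, w = so :: wpow [:: so; sx] t.
Definition fam_oO (w : seq bool) : Prop := exists t, w = [:: so; so] ++ wpow [:: sx; so] t.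
Definition fam_oOo (w : seq bool) : Prop :=
  exists t, w = [:: so; so] ++ wpow [:: sx; so] t ++ [:: so].
Definition fam_oAx (w : seq bool) : Prop :=
  exists n, 1 <= n /\ w = so :: wpow [:: so; sx] n ++ [:: sx].

Definition famneg (X : seq bool -> Prop) (w : seq bool) : Prop :=
  exists p, X p /\ w = wneg p.

Definition big_union (w : seq bool) : Prop :=
  famA w \/ famO w \/ fam_oA w \/ fam_oO w \/ fam_oOo w \/ fam_oAx w \/
  famneg famO w \/ famneg fam_oA w \/ famneg fam_oO w \/ famneg fam_oOo w.

(* Parts are identified with their left-right reversals. *)
Definition inU (w : seq bool) : Prop :=
  nontrivial w /\
  exists s, famA s /\ exists b, reachable (board_of s) b /\
    (is_part b w \/ is_part b (rev w)).

(* Main.v *)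
Require Import Defs.
From mathcomp Require Import all_boot zify.

Lemma wpowS u n : wpow u n.+1 = u ++ wpow u n.
Proof. by []. Qed.

Lemma wpowSr u n : wpow u n.+1 = wpow u n ++ u.
Proof. elim: n => [|n IH]; first by rewrite /wpow /= cats0.
by rewrite wpowS {1}IH catA -wpowS. Qed.

Lemma wpow_shift a b n : a :: wpow [:: b; a] n = wpow [:: a; b] n ++ [:: a].
Proof. elim: n => [|n IH] //. by rewrite !wpowS /= IH. Qed.

Lemma rev_wpow a b n : rev (wpow [:: a; b] n) = wpow [:: b; a] n.
Proof. elim: n => [|n IH] //. by rewrite wpowS rev_cat IH wpowSr. Qed.

Lemma wneg_wpow u n : wneg (wpow u n) = wpow (wneg u) n.
Proof. elim: n => [|n IH] //. rewrite !wpowS /wneg map_cat; congr (_ ++ _); exact: IH. Qed.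

Lemma nth_alt n i : i < 2 * n -> nth so (wpow [:: so; sx] n) i = odd i.
Proof.
elim: n i => [|n IH] [|[|i]] //= H.
rewrite IH //; lia.
Qed.

Lemma nth_board w k a : nth None (board_of w) k = Some a -> k < size w /\ a = nth so w k.
Proof.
case: (ltnP k (size w)) => H.
  by rewrite /board_of (nth_map so) // => -[<-].
by rewrite nth_default // size_map.
Qed.

Lemma size_wpow u n : size (wpow u n) = size u * n.
Proof. elim: n => [|n IH]; first by rewrite muln0. by rewrite wpowS size_cat IH mulnS. Qed.

Definition BG (b : board) := forall k a1 a2 a3 a4,
  nth None b k = Some a1 -> nth None b k.+1 = Some a2 ->
  nth None b k.+2 = Some a3 -> nth None b k.+3 = Some a4 -> a2 != a3.

Lemma BG_start n : BG (board_of (wpow [:: so; sx] n)).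
Proof.
move=> k a1 a2 a3 a4 _ /nth_board [H2 ->] /nth_board [H3 ->] _.
rewrite size_wpow /= in H2 H3.
by rewrite !nth_alt; try lia.
Qed.

Lemma BG_move b b' : BG b -> clobber_move b b' -> BG b'.
Proof.
move=> HB [i [j [c [Hij [Hi [Hj [Hbi [Hbj ->]]]]]]]].
have E m : nth None (set_nth None (set_nth None b j (Some c)) i None) m =
   if m == i then None else if m == j then Some c else nth None b m.
  by rewrite nth_set_nth /= nth_set_nth.
have S m a : m != i -> nth None (set_nth None (set_nth None b j (Some c)) i None) m = Some a ->
   exists a', nth None b m = Some a'.
  rewrite E => /negbTE ->. case: eqP => [->|_] H; [by exists (~~ c) | by exists a].
have M m a : m != i -> m != j -> nth None (set_nth None (set_nth None b j (Some c)) i None) m = Some a ->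
   nth None b m = Some a.
  by rewrite E => /negbTE -> /negbTE ->.
move=> k a1 a2 a3 a4 H1 H2 H3 H4.
have Ni m : nth None (set_nth None (set_nth None b j (Some c)) i None) m <> None -> m != i.
  by rewrite E; case: eqP.
have N1 : k != i by apply: Ni; rewrite H1.
have N2 : k.+1 != i by apply: Ni; rewrite H2.
have N3 : k.+2 != i by apply: Ni; rewrite H3.
have N4 : k.+3 != i by apply: Ni; rewrite H4.
have J2 : k.+1 != j by case: Hij => Hij; lia.
have J3 : k.+2 != j by case: Hij => Hij; lia.
have [b1 B1] := S _ _ N1 H1. have [b4 B4] := S _ _ N4 H4.
exact: (HB k b1 a2 a3 b4 B1 (M _ _ N2 J2 H2) (M _ _ N3 J3 H3) B4).
Qed.


Definition IA (w : seq bool) := forall i, 0 < i -> i.+2 < size w -> nth so w i != nth so w i.+1.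

Lemma part_IA b w : BG b -> is_part b w -> IA w.
Proof.
move=> HB [_ [l [r [Hb _]]]] i Hi Hs; subst b.
have N m : m < size w -> nth None (l ++ board_of w ++ r) (size l + m) = Some (nth so w m).
  move=> Hm; rewrite nth_cat ltnNge leq_addr /= addKn nth_cat size_map Hm.
  by rewrite (nth_map so).
have K1 : (size l + i.-1).+1 = size l + i by lia.
have K2 : (size l + i.-1).+2 = size l + i.+1 by lia.
have K3 : (size l + i.-1).+3 = size l + i.+2 by lia.
apply: (HB (size l + i.-1)); rewrite ?K3 ?K2 ?K1; apply: N; lia.
Qed.

Lemma IA_rev w : IA (rev w) -> IA w.
Proof.
move=> H i Hi Hs.
have := H (size w - i.+2); rewrite size_rev !nth_rev ?size_rev; try lia.
have -> : size w - (size w - i.+2).+1 = i.+1 by lia.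
have -> : size w - (size w - i.+2).+2 = i by lia.
rewrite eq_sym; apply; lia.
Qed.

Lemma reach_BG b0 b : reachable b0 b -> BG b0 -> BG b.
Proof. elim=> // b1 b2 _ IH Hm H0; exact: BG_move (IH H0) Hm. Qed.

Fixpoint altw (c : bool) n := if n is n'.+1 then c :: altw (~~ c) n' else [::].

Lemma alt_form c m : (forall i, i.+1 < size (c :: m) -> nth so (c :: m) i != nth so (c :: m) i.+1) ->
  c :: m = altw c (size m).+1.
Proof.
elim: m c => [|d m IH] c H //=; last first.
have := H 0 isT => /= Hcd.
have Ed : d = ~~ c by move: Hcd {H}; case: c; case: d.
subst d.
rewrite (IH (~~ c)) //= => i Hi. exact: (H i.+1).
Qed.

Lemma altw_even c k : altw c k.*2 = wpow [:: c; ~~ c] k.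
Proof. elim: k c => [|k IH] c //=. by rewrite negbK IH. Qed.

Lemma altw_odd c k : altw c k.*2.+1 = wpow [:: c; ~~ c] k ++ [:: c].
Proof. by rewrite /= altw_even negbK wpow_shift. Qed.

Lemma mapneg_wpow u n : map negb (wpow u n) = wpow (map negb u) n.
Proof. exact: wneg_wpow. Qed.

Lemma shift_cat a b k s : a :: (wpow [:: b; a] k ++ s) = wpow [:: a; b] k ++ a :: s.
Proof. by rewrite -cat_cons wpow_shift -catA. Qed.

Ltac weq := rewrite /so /sx /wneg; do 3 (rewrite ?map_cat ?mapneg_wpow ?rev_cons ?rev_rcons ?rev_cat ?rev_wpow ?wpowSr -?cats1 /=);
  rewrite -?cats1 -?catA /= ?shift_cat ?wpow_shift /= -?catA /= ?shift_cat ?wpow_shift /= -?catA; done.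

Lemma L w : nontrivial w -> IA w -> big_union w \/ big_union (rev w).
Proof.
case: w => [|a w]; first by case=> i [].
case/lastP: w => [|m b]; first by case=> i [].
case: m => [|c m].
  case=> -[|i] [Hi H] _ //=.
  move: H {Hi} => /=; case: a; case: b => // _.
    by right; rewrite /big_union; left; exists 1.
  by left; rewrite /big_union; left; exists 1.
move=> _ HI.
have Halt : forall i, i.+1 < size (c :: m) -> nth so (c :: m) i != nth so (c :: m) i.+1.
  move=> i Hi. have := HI i.+1 isT; rewrite /= size_rcons.
  have E1 : nth so (c :: rcons m b) i = nth so (c :: m) i.
    rewrite -rcons_cons nth_rcons ifT //; move: Hi => /=; lia.
  rewrite E1 nth_rcons ifT; last by move: Hi => /=; lia.
  apply; move: Hi => /=; lia.
rewrite (@alt_form c m Halt).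
move: (size m).+1 (ltn0Sn (size m)) => n Hn.
have [k [->|[-> Hk]]] : exists k, n = k.*2.+1 \/ (n = k.*2 /\ 0 < k).
  exists n./2; move: (odd_double_half n); case: (odd n) => /= E; [left|right]; lia.
- rewrite altw_odd -cats1 -catA /=.
  clear HI Halt; case: a; case: c; case: b => /=.
  + left; rewrite /big_union; do 9 right; exists ([:: so; so] ++ wpow [:: sx; so] k ++ [:: so]); split; [by exists k | weq].
  + left; rewrite /big_union; do 7 right; left; exists (so :: wpow [:: so; sx] k.+1); split; [by exists k.+1 | weq].
  + left; rewrite /big_union; do 6 right; left; exists (so :: wpow [:: sx; so] k.+1); split; [by exists k.+1 | weq].
  + right; rewrite /big_union; do 2 right; left; exists k.+1; weq.
  + right; rewrite /big_union; do 7 right; left; exists (so :: wpow [:: so; sx] k.+1); split; [by exists k.+1 | weq].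
  + left; rewrite /big_union; right; left; exists k.+1; weq.
  + left; rewrite /big_union; do 2 right; left; exists k.+1; weq.
  + left; rewrite /big_union; do 4 right; left; exists k; weq.
- rewrite altw_even -cats1.
  clear HI Halt; case: a; case: c; case: b => /=.
  + left; rewrite /big_union; do 8 right; left; exists ([:: so; so] ++ wpow [:: sx; so] k); split; [by exists k | weq].
  + right; rewrite /big_union; do 5 right; left; exists k; split => //; weq.
  + right; rewrite /big_union; do 8 right; left; exists ([:: so; so] ++ wpow [:: sx; so] k); split; [by exists k | weq].
  + right; rewrite /big_union; left; exists k.+1; split => //; weq.
  + left; rewrite /big_union; left; exists k.+1; split => //; weq.
  + right; rewrite /big_union; do 3 right; left; exists k; weq.
  + left; rewrite /big_union; do 5 right; left; exists k; split => //; weq.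
  + left; rewrite /big_union; do 3 right; left; exists k; weq.
Qed.


Lemma set_nth_catl (s r : board) n y : n < size s ->
  set_nth None (s ++ r) n y = set_nth None s n y ++ r.
Proof. elim: s n => [|x s IH] [|n] //= H. by rewrite IH. Qed.

Lemma set_nth_catr (s r : board) n y :
  set_nth None (s ++ r) (size s + n) y = s ++ set_nth None r n y.
Proof. elim: s => [|x s IH] //=. by rewrite IH. Qed.

Lemma move_l p p' X : clobber_move p p' -> clobber_move (p ++ X) (p' ++ X).
Proof.
move=> [i [j [c [Hij [Hi [Hj [Hbi [Hbj ->]]]]]]]].
exists i, j, c; rewrite !size_cat !nth_cat Hi Hj; do 5 (split; first by [|lia]).
rewrite set_nth_catl // set_nth_catl // size_set_nth; lia.
Qed.

Lemma move_r X q q' : clobber_move q q' -> clobber_move (X ++ q) (X ++ q').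
Proof.
move=> [i [j [c [Hij [Hi [Hj [Hbi [Hbj ->]]]]]]]].
exists (size X + i), (size X + j), c; rewrite !size_cat !nth_cat.
rewrite !ltnNge !leq_addr /= !addKn; do 5 (split; first by [|lia]).
by rewrite set_nth_catr set_nth_catr.
Qed.

Lemma m_l : clobber_move [:: Some so; Some sx] [:: None; Some so].
Proof. exists 0, 1, so; split; [left|]; by repeat split. Qed.
Lemma m_r : clobber_move [:: Some so; Some sx] [:: Some sx; None].
Proof. exists 1, 0, sx; split; [right|]; by repeat split. Qed.
Lemma m4a : clobber_move [:: Some so; Some sx; Some so; Some sx] [:: Some so; None; Some sx; Some sx].
Proof. exists 1, 2, sx; split; [left|]; by repeat split. Qed.
Lemma m4b : clobber_move [:: Some so; Some sx; Some so; Some sx] [:: Some so; Some so; None; Some sx].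
Proof. exists 2, 1, so; split; [right|]; by repeat split. Qed.

Definition Good w := exists s, famA s /\ exists b, reachable (board_of s) b /\ (is_part b w \/ is_part b (rev w)).

Lemma good_of N b w : 0 < N -> reachable (board_of (wpow [:: so; sx] N)) b ->
  is_part b w \/ is_part b (rev w) -> Good w.
Proof. move=> HN Hr Hp; exists (wpow [:: so; sx] N); split; [by exists N | by exists b]. Qed.

Lemma ip l w r : w != [::] -> (l = [::] \/ last None l = None) -> (r = [::] \/ head None r = None) ->
  is_part (l ++ board_of w ++ r) w.
Proof. move=> H1 H2 H3; split => //; by exists l, r. Qed.

Lemma r1 b0 b1 : clobber_move b0 b1 -> reachable b0 b1.
Proof. move=> H; exact: reach_step (reach_refl _) H. Qed.

Lemma r2 b0 b1 b2 : clobber_move b0 b1 -> clobber_move b1 b2 -> reachable b0 b2.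
Proof. move=> H1 H2; exact: reach_step (r1 _ _ H1) H2. Qed.


Lemma shift_map a b k s : Some a :: (map Some (wpow [:: b; a] k) ++ s) = map Some (wpow [:: a; b] k) ++ Some a :: s.
Proof. by rewrite -cat_cons -map_cons wpow_shift map_cat -catA. Qed.
Lemma shift_map1 a b k : Some a :: map Some (wpow [:: b; a] k) = map Some (wpow [:: a; b] k) ++ [:: Some a].
Proof. by rewrite -map_cons wpow_shift map_cat. Qed.

Lemma mapc (T U : Type) (f : T -> U) x s : map f (x :: s) = f x :: map f s.
Proof. by []. Qed.

Ltac beq := rewrite /board_of /wneg /so /sx; rewrite ?wpowSr; 
  do 3 (rewrite ?map_cat ?mapc ?mapneg_wpow ?rev_cons ?rev_rcons ?rev_cat ?rev_wpow ?wpowSr -?cats1 /=);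
  do 4 (rewrite -?catA /= ?cats0 ?shift_cat ?wpow_shift ?shift_map ?shift_map1 /= ?map_cat /=); done.

Lemma g_oO t : Good ([:: so; so] ++ wpow [:: sx; so] t).
Proof.
pose W := board_of (wpow [:: so; sx] t).
apply: (@good_of t.+3 (([:: None; Some so] ++ W) ++ [:: Some so; None; Some sx; Some sx])) => //.
- apply: (@r2 _ ([:: None; Some so] ++ (W ++ [:: Some so; Some sx; Some so; Some sx]))).
  + rewrite (_ : board_of _ = [:: Some so; Some sx] ++ (W ++ [:: Some so; Some sx; Some so; Some sx])); last by rewrite /W; beq.
    apply: move_l; exact: m_l.
  + rewrite catA; apply: move_r; exact: m4a.
- left; rewrite (_ : ([:: None; Some so] ++ W) ++ _ = [:: None] ++ board_of ([:: so; so] ++ wpow [:: sx; so] t) ++ [:: None; Some sx; Some sx]); last by rewrite /W; beq.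
  apply: ip => //; by [left|right].
Qed.

Lemma rev_nn (s : seq bool) : s != [::] -> rev s != [::].
Proof. by rewrite -!size_eq0 size_rev. Qed.

Lemma g_A n : 1 <= n -> Good (wpow [:: so; sx] n).
Proof.
case: n => // n _.
apply: (@good_of n.+1 (board_of (wpow [:: so; sx] n.+1))) => //; first exact: reach_refl.
left; rewrite -[board_of _]cats0 -[board_of _]cat0s -catA; apply: ip => //; by left.
Qed.

Lemma g_O t : Good (so :: wpow [:: sx; so] t).
Proof.
pose W := board_of (wpow [:: so; sx] t).
apply: (@good_of t.+2 (W ++ [:: Some so; None; Some sx; Some sx])) => //.
- apply: r1.
  rewrite (_ : board_of _ = W ++ [:: Some so; Some sx; Some so; Some sx]); last by rewrite /W; beq.
  apply: move_r; exact: m4a.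
- left; rewrite (_ : W ++ _ = [::] ++ board_of (so :: wpow [:: sx; so] t) ++ [:: None; Some sx; Some sx]); last by rewrite /W; beq.
  apply: ip => //; by [left|right].
Qed.

Lemma g_oA t : Good (so :: wpow [:: so; sx] t).
Proof.
pose W := board_of (wpow [:: so; sx] t).
apply: (@good_of t.+1 ([:: None; Some so] ++ W)) => //.
- apply: r1.
  rewrite (_ : board_of _ = [:: Some so; Some sx] ++ W); last by rewrite /W; beq.
  apply: move_l; exact: m_l.
- left; rewrite (_ : _ ++ W = [:: None] ++ board_of (so :: wpow [:: so; sx] t) ++ [::]); last by rewrite /W; beq.
  apply: ip => //; by [left|right].
Qed.

Lemma g_oOo t : Good ([:: so; so] ++ wpow [:: sx; so] t ++ [:: so]).
Proof.
pose W := board_of (wpow [:: so; sx] t).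
apply: (@good_of t.+3 (([:: None; Some so] ++ W) ++ [:: Some so; Some so; None; Some sx])) => //.
- apply: (@r2 _ ([:: None; Some so] ++ (W ++ [:: Some so; Some sx; Some so; Some sx]))).
  + rewrite (_ : board_of _ = [:: Some so; Some sx] ++ (W ++ [:: Some so; Some sx; Some so; Some sx])); last by rewrite /W; beq.
    apply: move_l; exact: m_l.
  + rewrite catA; apply: move_r; exact: m4b.
- left; rewrite (_ : ([:: None; Some so] ++ W) ++ _ = [:: None] ++ board_of ([:: so; so] ++ wpow [:: sx; so] t ++ [:: so]) ++ [:: None; Some sx]); last by rewrite /W; beq.
  apply: ip => //; by [left|right].
Qed.

Lemma g_oAx n : Good (so :: wpow [:: so; sx] n ++ [:: sx]).
Proof.
pose W := board_of (wpow [:: so; sx] n).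
apply: (@good_of n.+2 (([:: None; Some so] ++ W) ++ [:: Some sx; None])) => //.
- apply: (@r2 _ ([:: None; Some so] ++ (W ++ [:: Some so; Some sx]))).
  + rewrite (_ : board_of _ = [:: Some so; Some sx] ++ (W ++ [:: Some so; Some sx])); last by rewrite /W; beq.
    apply: move_l; exact: m_l.
  + rewrite catA; apply: move_r; exact: m_r.
- left; rewrite (_ : ([:: None; Some so] ++ W) ++ _ = [:: None] ++ board_of (so :: wpow [:: so; sx] n ++ [:: sx]) ++ [:: None]); last by rewrite /W; beq.
  apply: ip => //; by [left|right].
Qed.

Lemma g_nO t : Good (wneg (so :: wpow [:: sx; so] t)).
Proof.
pose W := board_of (wpow [:: so; sx] t).
apply: (@good_of t.+2 ([:: Some so; Some so; None; Some sx] ++ W)) => //.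
- apply: r1.
  rewrite (_ : board_of _ = [:: Some so; Some sx; Some so; Some sx] ++ W); last by rewrite /W; beq.
  apply: move_l; exact: m4b.
- left; rewrite (_ : _ ++ W = [:: Some so; Some so; None] ++ board_of (wneg (so :: wpow [:: sx; so] t)) ++ [::]); last by rewrite /W; beq.
  apply: ip => //; by [left|right].
Qed.

Lemma g_noA t : Good (wneg (so :: wpow [:: so; sx] t)).
Proof.
pose W := board_of (wpow [:: so; sx] t).
apply: (@good_of t.+1 (W ++ [:: Some sx; None])) => //.
- apply: r1.
  rewrite (_ : board_of _ = W ++ [:: Some so; Some sx]); last by rewrite /W; beq.
  apply: move_r; exact: m_r.
- right; rewrite (_ : W ++ _ = [::] ++ board_of (rev (wneg (so :: wpow [:: so; sx] t))) ++ [:: None]); last by rewrite /W; beq.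
  apply: ip => //; [by apply: rev_nn | by left | by right].
Qed.

Lemma g_noO t : Good (wneg ([:: so; so] ++ wpow [:: sx; so] t)).
Proof.
pose W := board_of (wpow [:: so; sx] t).
apply: (@good_of t.+2 ([:: Some so; None; Some sx; Some sx] ++ W)) => //.
- apply: r1.
  rewrite (_ : board_of _ = [:: Some so; Some sx; Some so; Some sx] ++ W); last by rewrite /W; beq.
  apply: move_l; exact: m4a.
- left; rewrite (_ : _ ++ W = [:: Some so; None] ++ board_of (wneg ([:: so; so] ++ wpow [:: sx; so] t)) ++ [::]); last by rewrite /W; beq.
  apply: ip => //; by [left|right].
Qed.

Lemma g_noOo t : Good (wneg ([:: so; so] ++ wpow [:: sx; so] t ++ [:: so])).
Proof.
pose W := board_of (wpow [:: so; sx] t).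
apply: (@good_of t.+3 (([:: Some so; None; Some sx; Some sx] ++ W) ++ [:: Some sx; None])) => //.
- apply: (@r2 _ ([:: Some so; None; Some sx; Some sx] ++ (W ++ [:: Some so; Some sx]))).
  + rewrite (_ : board_of _ = [:: Some so; Some sx; Some so; Some sx] ++ (W ++ [:: Some so; Some sx])); last by rewrite /W; beq.
    apply: move_l; exact: m4a.
  + rewrite catA; apply: move_r; exact: m_r.
- left; rewrite (_ : (_ ++ W) ++ _ = [:: Some so; None] ++ board_of (wneg ([:: so; so] ++ wpow [:: sx; so] t ++ [:: so])) ++ [:: None]); last by rewrite /W; beq.
  apply: ip => //; by [left|right].
Qed.

Lemma complete v : big_union v -> Good v.
Proof.
case=> [[n [Hn ->]]|H]; first exact: g_A.
case: H => [[t ->]|H]; first exact: g_O.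
case: H => [[t ->]|H]; first exact: g_oA.
case: H => [[t ->]|H]; first exact: g_oO.
case: H => [[t ->]|H]; first exact: g_oOo.
case: H => [[n [Hn ->]]|H]; first exact: g_oAx.
case: H => [[p [[t ->] ->]]|H]; first exact: g_nO.
case: H => [[p [[t ->] ->]]|H]; first exact: g_noA.
case: H => [[p [[t ->] ->]]|H]; first exact: g_noO.
case: H => [p [[t ->] ->]]; exact: g_noOo.
Qed.

Theorem theorem1 (w : seq bool) :
  inU w <-> (nontrivial w /\ (big_union w \/ big_union (rev w))).
Proof.
split.
- case=> Hnt [s [[n [Hn ->]] [b [Hr Hp]]]]; split => //.
  have HB := reach_BG _ _ Hr (BG_start n).
  case: Hp => Hp.
  + exact: L _ Hnt (part_IA _ _ HB Hp).
  + exact: L _ Hnt (IA_rev _ (part_IA _ _ HB Hp)).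
- case=> Hnt [Hu|Hu]; split => //.
  + exact: complete _ Hu.
  + have [s [Hs [b [Hr Hp]]]] := complete _ Hu.
    exists s; split => //; exists b; split => //.
    rewrite revK in Hp; tauto.
Qed.
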